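(* Let $(h,n)=(3,3)$ and $p\in\mathcal P$. Then: (i) the following are equivalent: (a) the three alternatives ranked first by the three individuals are pairwise distinct and the three alternatives ranked third are pairwise distinct; (b) $\Gamma_2(p)$ is a $3$-cycle. Moreover, if one of these conditions holds, the arc set of $\Gamma_3(p)$ is empty. (ii) $\mu(p)=\mu(p^r)$.
   Context: Here $N=\{1,2,3\}$, $H=\{1,2,3\}$, $\mathcal P$ the set of triples of linear orders on $N$, $p^r$ the profile obtained by reversing each order; $x>_{p_i}y$ means $x\neq y$ and $p_i$ ranks $x$ above $y$; for $\mu\in\{2,3\}$, $x>^p_\mu y$ means $|\{i: x>_{p_i}y\}|\ge\mu$, $\Gamma_\mu(p)$ is the directed graph $(N,\{(x,y): x>^p_\mu y\})$, $D_\mu(p)=\{x\in N: \forall y,\ |\{i: y>_{p_i}x\}|<\mu\}$, and $\mu(p)=\min\{\mu\in\{2,3\}: D_\mu(p)\ne\varnothing\}$. A $3$-cycle is a directed graph on three vertices $x_1,x_2,x_3$ whose arc set is exactly $\{(x_1,x_2),(x_2,x_3),(x_3,x_1)\}$. *)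

(* Defs.v *)
From mathcomp Require Import all_boot fingroup perm.
Set Implicit Arguments. Unset Strict Implicit. Unset Printing Implicit Defensive.

(* Alternatives N = {1,2,3} are 'I_3, individuals H = {1,2,3} are 'I_3.
   A linear order on N is represented by a ranking o : {perm 'I_3}:
   o r is the alternative in position r (r = 0 is the top). *)
Definition alt := 'I_3.
Definition indiv := 'I_3.
Definition lorder := {perm alt}.
Definition profile := indiv -> lorder.

Definition prefers (o : lorder) (x y : alt) : bool := ((o^-1)%g x < (o^-1)%g y)%N.

(* reversed order: position r of the reversal is position 2 - r of o *)
Definition rev_order (o : lorder) : lorder := (perm (@rev_ord_inj 3) * o)%g.
Definition rev_profile (p : profile) : profile := fun i => rev_order (p i).

Definition nprefer (p : profile) (x y : alt) : nat := #|[set i : indiv | prefers (p i) x y]|.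

Definition beats (mu : nat) (p : profile) (x y : alt) : bool := (mu <= nprefer p x y)%N.

Definition Gamma (mu : nat) (p : profile) : rel alt := fun x y => beats mu p x y.

Definition is_3cycle (E : rel alt) : Prop :=
  exists x1 x2 x3 : alt, [/\ x1 != x2, x2 != x3 & x1 != x3] /\
    forall x y, E x y <-> ((x, y) = (x1, x2) \/ (x, y) = (x2, x3) \/ (x, y) = (x3, x1)).

Definition D (mu : nat) (p : profile) : {set alt} :=
  [set x | [forall y, (nprefer p y x < mu)%N]].

(* mu(p) = min { mu in {2,3} | D_mu(p) <> empty }, None if that set is empty *)
Definition mu_of (p : profile) : option nat :=
  if D 2 p != set0 then Some 2 else if D 3 p != set0 then Some 3 else None.

Definition top (o : lorder) : alt := o ord0.
Definition third (o : lorder) : alt := o ord_max.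

Definition pairwise_distinct (f : indiv -> alt) : Prop :=
  forall i j : indiv, i != j -> f i != f j.

(* Main.v *)
Require Import Defs.
From mathcomp Require Import all_boot fingroup perm.

Definition trip := (alt * alt * alt)%type.
Definition o0 : 'I_3 := @ord0 2.
Definition o1 : 'I_3 := @Ordinal 3 1 isT.
Definition o2 : 'I_3 := @ord_max 2.
Definition A3 : seq alt := [:: o0; o1; o2].
Definition L : seq trip := [seq t <- [seq (ab, c) | ab <- [seq (a,b) | a <- A3, b <- A3], c <- A3] | [&& t.1.1 != t.1.2, t.1.1 != t.2 & t.1.2 != t.2]].

Definition pos (t : trip) (x : alt) : nat := if x == t.1.1 then 0 else if x == t.1.2 then 1 else 2.
Definition pref (t : trip) x y := (pos t x < pos t y)%N.
Definition npref (w0 w1 w2 : trip) x y : nat := pref w0 x y + pref w1 x y + pref w2 x y.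
Definition pd3 (a b c : alt) := [&& a != b, a != c & b != c].
Definition tri (x y a b c : alt) :=
  [|| (x == a) && (y == b), (x == b) && (y == c) | (x == c) && (y == a)].
Definition cycb (E : alt -> alt -> bool) :=
  has (fun x1 => has (fun x2 => has (fun x3 => pd3 x1 x2 x3 &&
     all (fun x => all (fun y => E x y == tri x y x1 x2 x3) A3) A3) A3) A3) A3.
Definition noarc (E : alt -> alt -> bool) := all (fun x => all (fun y => ~~ E x y) A3) A3.
Definition Dne mu w0 w1 w2 := has (fun x => all (fun y => npref w0 w1 w2 y x < mu)%N A3) A3.
Definition mub w0 w1 w2 : option nat :=
  if Dne 2 w0 w1 w2 then Some 2 else if Dne 3 w0 w1 w2 then Some 3 else None.
Definition rt (t : trip) : trip := (t.2, t.1.2, t.1.1).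
Definition B (w0 w1 w2 : trip) :=
  let G mu := fun x y => (mu <= npref w0 w1 w2 x y)%N in
  let cond := pd3 w0.1.1 w1.1.1 w2.1.1 && pd3 w0.2 w1.2 w2.2 in
  [&& cond == cycb (G 2), (cond || cycb (G 2)) ==> noarc (G 3)
    & mub w0 w1 w2 == mub (rt w0) (rt w1) (rt w2)].

Lemma check_all : all (fun w0 => all (fun w1 => all (fun w2 => B w0 w1 w2) L) L) L.
Proof. vm_compute. reflexivity. Qed.

Lemma ord3 (x : 'I_3) : x = o0 \/ x = o1 \/ x = o2.
Proof.
case: x => [[|[|[|m]]] Hm].
- by left; apply/val_inj.
- by right; left; apply/val_inj.
- by right; right; apply/val_inj.
- by [].
Qed.

Lemma memA3 x : x \in A3.
Proof. by case: (ord3 x) => [->|[->|->]]. Qed.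

Definition T (o : lorder) : trip := (o o0, o o1, o o2).

Lemma TL (o : lorder) : T o \in L.
Proof.
rewrite mem_filter; apply/andP; split.
  by rewrite /T /= !(inj_eq perm_inj).
apply/allpairsP; exists ((o o0, o o1), o o2); split; last by [].
  apply/allpairsP; exists (o o0, o o1); split; by rewrite ?memA3.
by rewrite memA3.
Qed.

Lemma posE (o : lorder) x : val ((o^-1)%g x) = pos (T o) x.
Proof.
rewrite /pos /=.
have -> : x = o ((o^-1)%g x) by rewrite permKV.
rewrite permK !(inj_eq perm_inj).
by case: (ord3 ((o^-1)%g x)) => [->|[->|->]].
Qed.

Lemma prefE o x y : prefers o x y = pref (T o) x y.
Proof. by rewrite /prefers /pref -!posE. Qed.

Lemma nprefE (p : profile) x y :
  nprefer p x y = npref (T (p o0)) (T (p o1)) (T (p o2)) x y.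
Proof.
rewrite /nprefer -sum1_card big_mkcond !big_ord_recl big_ord0 !in_set.
rewrite /npref -!prefE.
have -> : lift ord0 ord0 = o1 :> 'I_3 by apply/val_inj.
have -> : lift ord0 (lift ord0 (@ord0 0)) = o2 :> 'I_3 by apply/val_inj.
by case: (prefers (p o0) x y); case: (prefers (p o1) x y); case: (prefers (p o2) x y).
Qed.

Lemma pdE (f : indiv -> alt) : pairwise_distinct f <-> pd3 (f o0) (f o1) (f o2).
Proof.
split.
- by move=> H; rewrite /pd3 !H.
- move=> /and3P [H1 H2 H3] i j.
  case: (ord3 i) => [->|[->|->]]; case: (ord3 j) => [->|[->|->]] //;
    by rewrite ?eqxx // => _; rewrite // eq_sym.
Qed.

Lemma triE x y a b c : tri x y a b c <-> ((x, y) = (a, b) \/ (x, y) = (b, c) \/ (x, y) = (c, a)).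
Proof.
split.
- by case/or3P => /andP [/eqP -> /eqP ->]; auto.
- by case=> [[-> ->]|[[-> ->]|[-> ->]]]; rewrite /tri !eqxx ?orbT.
Qed.

Lemma cycE (E : rel alt) : is_3cycle E <-> cycb E.
Proof.
split.
- case=> [x1 [x2 [x3 [[d1 d2 d3] H]]]].
  apply/hasP; exists x1; first exact: memA3.
  apply/hasP; exists x2; first exact: memA3.
  apply/hasP; exists x3; first exact: memA3.
  apply/andP; split; first by rewrite /pd3 d1 d2 d3.
  apply/allP => x _; apply/allP => y _; apply/eqP.
  case: (H x y) => H1 H2.
  apply/idP/idP => [/H1 /triE // | /triE /H2 //].
- case/hasP => x1 _ /hasP [x2 _ /hasP [x3 _ /andP [/and3P [d1 d2 d3] Ha]]].
  exists x1, x2, x3; split; first by [].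
  move=> x y.
  have := allP (allP Ha x (memA3 x)) y (memA3 y) => /eqP ->.
  exact: triE.
Qed.

Lemma cyc_ext (E1 E2 : rel alt) : E1 =2 E2 -> (is_3cycle E1 <-> is_3cycle E2).
Proof.
move=> H; split; case=> [x1 [x2 [x3 [d Hc]]]]; exists x1, x2, x3; split => // x y.
- by rewrite -H.
- by rewrite H.
Qed.

Lemma DE mu (p : profile) :
  (D mu p != set0) = Dne mu (T (p o0)) (T (p o1)) (T (p o2)).
Proof.
apply/set0Pn/hasP.
- case=> x; rewrite in_set => /forallP Hx.
  exists x; first exact: memA3.
  by apply/allP => y _; rewrite -nprefE.
- case=> x _ /allP Hx; exists x; rewrite in_set; apply/forallP => y.
  by rewrite nprefE; apply: Hx; apply: memA3.
Qed.

Lemma muE (p : profile) : mu_of p = mub (T (p o0)) (T (p o1)) (T (p o2)).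
Proof. by rewrite /mu_of /mub !DE. Qed.

Lemma revT (o : lorder) : T (rev_order o) = rt (T o).
Proof.
rewrite /T /rt /rev_order !permM !permE /=.
have -> : rev_ord o0 = o2 by apply/val_inj.
have -> : rev_ord o1 = o1 by apply/val_inj.
have -> : rev_ord o2 = o0 by apply/val_inj.
by [].
Qed.

Theorem lemma8 (p : profile) :
  ((pairwise_distinct (fun i => top (p i)) /\ pairwise_distinct (fun i => third (p i)))
     <-> is_3cycle (Gamma 2 p))
  /\ ((pairwise_distinct (fun i => top (p i)) /\ pairwise_distinct (fun i => third (p i)))
        \/ is_3cycle (Gamma 2 p) ->
      forall x y : alt, ~~ Gamma 3 p x y)
  /\ mu_of p = mu_of (rev_profile p).
Proof.
have HB : B (T (p o0)) (T (p o1)) (T (p o2)).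
  exact: (allP (allP (allP check_all _ (TL (p o0))) _ (TL (p o1))) _ (TL (p o2))).
case/and3P: HB => /eqP Hc /implyP Hn /eqP Hm.
set G := fun mu x y => (mu <= npref (T (p o0)) (T (p o1)) (T (p o2)) x y)%N.
have HG : forall mu, Gamma mu p =2 G mu by move=> mu x y; rewrite /Gamma /beats nprefE.
have Hcond : (pairwise_distinct (fun i => top (p i)) /\ pairwise_distinct (fun i => third (p i)))
   <-> (pd3 (T (p o0)).1.1 (T (p o1)).1.1 (T (p o2)).1.1 && pd3 (T (p o0)).2 (T (p o1)).2 (T (p o2)).2).
  split.
    by case=> /pdE H1 /pdE H2; rewrite H1 H2.
  by case/andP => H1 H2; split; apply/pdE.
have Hcy : is_3cycle (Gamma 2 p) <-> cycb (G 2).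
  have h1 := @cyc_ext _ _ (HG 2); have h2 := cycE (G 2); tauto.
split; [|split].
- apply: (iff_trans Hcond); apply: (fun h => iff_trans h (iff_sym Hcy)); rewrite Hc; split=> h; exact: h.
- move=> H x y; rewrite HG.
  have : noarc (G 3).
    apply: Hn; case: H => [/Hcond -> // | /Hcy ->]; by rewrite orbT.
  by move/allP => /(_ x (memA3 x)) /allP /(_ y (memA3 y)).
- rewrite !muE Hm /rev_profile !revT //.
Qed.
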